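(* Let $n\geq 2$ be an integer and let $G$ be a tree of order $m\geq 3$. Then $\chi_{ld}(G[\overline{K_{n}}])=2$ if and only if $G$ is a star $K_{1,m-1}$.
   Context: All graphs are finite, simple and undirected. For a graph $G=(V,E)$ of order $N$ without isolated vertices, a bijection $f\colon V\to\{1,2,\dots,N\}$ is a local distance antimagic labeling if $w(u)\neq w(v)$ for every edge $uv$, where $w(u)=\sum_{x\in N(u)}f(x)$ and $N(u)$ is the open neighborhood of $u$. $\chi_{ld}(G)$ is the minimum number of distinct weights over all local distance antimagic labelings of $G$. $\overline{K_n}$ is the edgeless graph on $n$ vertices. The lexicographic product $G[H]$ has vertex set $V(G)\times V(H)$, with $(g,h)$ adjacent to $(g',h')$ iff $gg'\in E(G)$, or $g=g'$ and $hh'\in E(H)$. *)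

(* Defs.v *)
From mathcomp Require Import all_boot.
Set Implicit Arguments. Unset Strict Implicit. Unset Printing Implicit Defensive.

Definition simple_graph (T : finType) (e : rel T) : Prop :=
  symmetric e /\ irreflexive e.

Definition connected_graph (T : finType) (e : rel T) : Prop :=
  forall x y : T, connect e x y.

Definition acyclic_graph (T : finType) (e : rel T) : Prop :=
  ~ exists s : seq T, [/\ uniq s, 3 <= size s & cycle e s].

Definition is_tree (T : finType) (e : rel T) : Prop :=
  connected_graph e /\ acyclic_graph e.

Definition is_star (T : finType) (e : rel T) : Prop :=
  exists c : T, forall u v : T, e u v = (u != v) && ((u == c) || (v == c)).

Definition edgeless (U : finType) : rel U := fun _ _ => false.

Definition lexprod (T U : finType) (e : rel T) (h : rel U) : rel (T * U) :=
  fun p q => e p.1 q.1 || ((p.1 == q.1) && h p.2 q.2).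

Definition weight (V : finType) (e : rel V) (f : V -> nat) (u : V) : nat :=
  \sum_(x : V | e u x) f x.

Definition is_labeling (V : finType) (f : V -> nat) : Prop :=
  injective f /\ forall v, 1 <= f v <= #|V|.

Definition no_isolated (V : finType) (e : rel V) : Prop :=
  forall u : V, exists v : V, e u v.

Definition is_ld_antimagic (V : finType) (e : rel V) (f : V -> nat) : Prop :=
  is_labeling f /\ forall u v : V, e u v -> weight e f u != weight e f v.

Definition num_weights (V : finType) (e : rel V) (f : V -> nat) : nat :=
  size (undup [seq weight e f u | u <- enum V]).

Definition chi_ld_is (V : finType) (e : rel V) (k : nat) : Prop :=
  no_isolated e /\
  (exists f, is_ld_antimagic e f /\ num_weights e f = k) /\
  (forall f, is_ld_antimagic e f -> k <= num_weights e f).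

(* Main.v *)
Require Import Defs.
From mathcomp Require Import all_boot.
From mathcomp Require Import perm zify.

Section G.
Variables (T : finType) (e : rel T).
Hypothesis (se : symmetric e) (ie : irreflexive e).

Lemma conn_closed (S : pred T) x v : S x -> (forall a b, S a -> e a b -> S b) ->
  connect e x v -> S v.
Proof.
move=> Sx cl /connectP [p pp ->].
elim: p x Sx pp => //= a p IH x Sx /andP[exa pp].
exact: IH (cl _ _ Sx exa) pp.
Qed.

Lemma noP4_star : connected_graph e -> 3 <= #|T| ->
  (forall x y z u, e x y -> e y z -> e z u -> x != z -> y != u -> False) ->
  is_star e.
Proof.
move=> con h3 nb.
case: (boolP [exists y, exists z1, exists z2, [&& e y z1, e y z2 & z1 != z2]]).
  case/existsP=> y /existsP[z1 /existsP[z2 /and3P[e1 e2 ne]]].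
  have nbu : forall u q, e y u -> e u q -> q = y.
    move=> u q eyu euq; apply/eqP; apply/negPn/negP => qy.
    have [z [eyz zu]] : exists z, e y z /\ z != u.
      case: (eqVneq z1 u) => [z1u|]; last by exists z1.
      by exists z2; split => //; rewrite -z1u eq_sym.
    by apply: (nb q u y z) => //; rewrite 1?se // eq_sym.
  have inS : forall v, (v == y) || e y v.
    move=> v; apply: (@conn_closed (fun v => (v == y) || e y v) y v _ _ (con y v)).
      by rewrite eqxx.
    move=> a b /orP[/eqP->|eya] eab; first by rewrite eab orbT.
    by rewrite (nbu a b eya eab) eqxx.
  exists y => u v.
  case euv: (e u v).
    have uv : u != v by apply/eqP => E; rewrite E ie in euv.
    rewrite uv /=; case/orP: (inS u) => [->//|eyu].
    by rewrite (nbu u v eyu euv) eqxx orbT.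
  symmetry; apply/negbTE/negP => /andP[uv /orP[/eqP Eu|/eqP Ev]].
    subst u; case/orP: (inS v) => [/eqP E|eyv]; last by rewrite eyv in euv.
    by subst v; rewrite eqxx in uv.
  subst v; case/orP: (inS u) => [/eqP E|eyu]; last by rewrite se eyu in euv.
  by subst u; rewrite eqxx in uv.
move/existsPn=> H.
have deg1 : forall y z1 z2, e y z1 -> e y z2 -> z1 = z2.
  move=> y z1 z2 e1 e2; move: (H y) => /existsPn/(_ z1)/existsPn/(_ z2).
  by rewrite e1 e2 /= negbK => /eqP.
have : 0 < #|T| by apply: leq_trans h3.
case/card_gt0P => x _.
have [a ax] : exists a, a != x.
  case: (pickP (predC1 x)) => [a /= ?|H0]; first by exists a.
  by have := cardC1 x; rewrite (eq_card0 H0); lia.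
have [y exy] : exists y, e x y.
  move: (con x a) => /connectP[[|y p] /= pp E]; first by rewrite E eqxx in ax.
  by exists y; case/andP: pp.
have inS : forall v, (v == x) || (v == y).
  move=> v; apply: (@conn_closed (fun v => (v == x) || (v == y)) x v _ _ (con x v)).
    by rewrite eqxx.
  move=> a' b /orP[/eqP->|/eqP->] eab.
    by rewrite (deg1 _ _ _ eab exy) eqxx orbT.
  have eyx : e y x by rewrite se.
  by rewrite (deg1 _ _ _ eab eyx) eqxx.
have : #|T| <= #|[set x; y]|.
  by apply: subset_leq_card; apply/subsetP => v _; rewrite !inE.
by rewrite cards2; case: (x != y) => /=; move=> /(leq_trans h3).
Qed.

Lemma extend k a t : uniq (a::t) -> path e a t -> #|T| - size t <= k ->
  exists b u, [/\ uniq (b::u), path e b u, size t <= size u &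
                 forall y, e b y -> y \in b::u].
Proof.
elim: k a t => [|k IH] a t ut pt hk;
 (case: (boolP [exists y, e a y && (y \notin a::t)]) =>
   [/existsP[y /andP[eay yn]]|/existsPn H]);
 try (by exists a, t; split => // y eay; move: (H y); rewrite eay /= negbK).
- have /card_uniqP cu : uniq (y::a::t) by rewrite cons_uniq yn ut.
  have := max_card (mem (y::a::t)); rewrite cu /= => H.
  move: hk; rewrite leqn0 subn_eq0 => hk.
  by have := leq_trans H hk; rewrite ltnNge leqnSn.
- have uy : uniq (y::a::t) by rewrite cons_uniq yn ut.
  have py : path e y (a::t) by rewrite /= se eay pt.
  have hk' : #|T| - size (a::t) <= k.
    by move: hk; rewrite /= subnS; case: (#|T| - size t).
  have [b [u [h1 h2 h3 h4]]] := IH y (a::t) uy py hk'.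
  by exists b, u; split => //; apply: leq_trans h3.
Qed.

Lemma leaf_nb b v1 u : acyclic_graph e -> uniq (b::v1::u) -> path e b (v1::u) ->
  (forall y, e b y -> y \in b::v1::u) -> forall y, e b y -> y = v1.
Proof.
move=> ac uq pt hn y eby.
have yin : y \in v1::u.
  move: (hn y eby); rewrite inE => /orP[/eqP E|//]; by rewrite E ie in eby.
have [p1 [p2 E]] : exists p1 p2, v1::u = p1 ++ y :: p2.
  by case/splitPr: yin => p1 p2; exists p1, p2.
case: p1 E => [[->]//|a q] E.
exfalso; apply: ac; exists (b :: rcons (a::q) y).
rewrite E in uq pt; split.
- apply: subseq_uniq uq; rewrite /= eqxx -cats1.
  rewrite eqxx; apply: cat_subseq (subseq_refl _) _; by rewrite /= eqxx sub0seq.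
- by rewrite /= size_rcons.
- move: pt => /= /andP[-> ]; rewrite cat_path /= => /andP[pq /andP[ey _]].
  by rewrite !rcons_path last_rcons pq ey se eby.
Qed.
End G.

Lemma wE (n : nat) (T : finType) (e : rel T) f g i :
  weight (lexprod e (@edgeless 'I_n)) f (g, i) =
  \sum_(g' | e g g') \sum_(j < n) f (g', j).
Proof.
rewrite /weight /lexprod /edgeless /= pair_big_dep /=.
by apply: eq_big => [[a b]|[a b] _] /=; rewrite ?andbF ?orbF ?andbT.
Qed.

Lemma nw_ge2 (V : finType) (w : V -> nat) a b : w a != w b ->
  2 <= size (undup [seq w u | u <- enum V]).
Proof.
move=> ab; have -> : 2 = size [:: w a; w b] by [].
apply: uniq_leq_size; first by rewrite /= andbT inE.
by move=> x; rewrite !inE mem_undup => /orP[/eqP->|/eqP->]; apply: map_f; rewrite mem_enum.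
Qed.

Lemma nw_ge3 (V : finType) (w : V -> nat) a b c : w a != w b -> w b != w c ->
  w a != w c -> 3 <= size (undup [seq w u | u <- enum V]).
Proof.
move=> ab bc ac; have -> : 3 = size [:: w a; w b; w c] by [].
apply: uniq_leq_size; first by rewrite /= !inE !negb_or ab ac bc.
by move=> x; rewrite !inE mem_undup => /or3P[/eqP->|/eqP->|/eqP->];
  apply: map_f; rewrite mem_enum.
Qed.

Lemma nw_le2 (V : finType) (w : V -> nat) A B : (forall u, (w u == A) || (w u == B)) ->
  size (undup [seq w u | u <- enum V]) <= 2.
Proof.
move=> H; have -> : 2 = size [:: A; B] by [].
apply: uniq_leq_size; first exact: undup_uniq.
by move=> x; rewrite mem_undup => /mapP[u _ ->]; rewrite !inE.
Qed.

Theorem mainTheorem9 (n : nat) (T : finType) (e : rel T) :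
  simple_graph e -> 2 <= n -> 3 <= #|T| -> is_tree e ->
  (chi_ld_is (lexprod e (@edgeless 'I_n)) 2 <-> is_star e).
Proof.
move=> [se ie] hn h3 [con ac].
have n0 : 0 < n by apply: ltnW.
pose i0 : 'I_n := Ordinal n0.
split.
- move=> [_ [[f [[[finj frng] fanti] fnum]] _]].
  apply: (noP4_star _ _ se ie con h3) => x y z u exy eyz ezu xz yu.
  have xy : x != y by apply/eqP => E; rewrite E ie in exy.
  have yz : y != z by apply/eqP => E; rewrite E ie in eyz.
  have zu : z != u by apply/eqP => E; rewrite E ie in ezu.
  have xu : x != u.
    apply/eqP => E; subst u; apply: ac; exists [:: x; y; z]; split => //=.
      by rewrite !inE negb_or xy xz yz.
    by rewrite exy eyz ezu.
  have ut : uniq [:: x; y; z; u] by rewrite /= !inE !negb_or xy xz xu yz yu zu.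
  have pt : path e x [:: y; z; u] by rewrite /= exy eyz ezu.
  have [b [U [ub pb sz hb]]] := extend _ _ se _ _ _ ut pt (leq_subr _ _).
  case: U ub pb sz hb => [|v1 [|v2 [|v3 U]]] //= ub pb _ hb.
  have lf := leaf_nb _ _ se ie _ _ _ ac ub pb hb.
  move: ub pb; rewrite /= !inE !negb_or => /andP[/and4P[bv1 bv2 bv3 _]]
    /andP[/and3P[v12 v13 _] _] /and4P[ebv1 ev12 ev23 _].
  pose S g := \sum_(j < n) f (g, j).
  have wb : weight (lexprod e (@edgeless 'I_n)) f (b, i0) = S v1.
    rewrite wE (eq_bigl (fun g => g == v1)) ?big_pred1_eq //.
    by move=> g; apply/idP/eqP => [/lf //|->].
  have S3 : 0 < S v3.
    rewrite /S (bigD1 i0) //=; have := frng (v3, i0); case/andP => h _.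
    exact: leq_trans h (leq_addr _ _).
  have w2 : S v1 + S v3 <= weight (lexprod e (@edgeless 'I_n)) f (v2, i0).
    rewrite wE (bigD1 v1) /=; last by rewrite se.
    rewrite (bigD1 v3) /=; last by rewrite ev23 eq_sym v13.
    by rewrite addnA leq_addr.
  have a1 := fanti (b, i0) (v1, i0) ltac:(by rewrite /lexprod /= ebv1).
  have a2 := fanti (v1, i0) (v2, i0) ltac:(by rewrite /lexprod /= ev12).
  have a3 : weight (lexprod e (@edgeless 'I_n)) f (b, i0) !=
            weight (lexprod e (@edgeless 'I_n)) f (v2, i0).
    by rewrite wb neq_ltn; apply/orP; left; apply: leq_trans w2; rewrite -addn1 leq_add2l.
  have := @nw_ge3 _ _ _ _ _ a1 a2 a3; move: fnum; rewrite /num_weights => ->.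
  by [].
- move=> [c hc].
  have [g1 g1c] : exists g1, g1 != c.
    case: (pickP (predC1 c)) => [a /= ?|H0]; first by exists a.
    by have := cardC1 c; rewrite (eq_card0 H0); lia.
  have ecg : forall g g', e g g' = (g != g') && ((g == c) || (g' == c)) by [].
  split.
    move=> [g i]; have [g' egg'] : exists g', e g g'.
      case: (eqVneq g c) => [->|gc]; first by exists g1; rewrite hc eq_sym g1c eqxx.
      by exists c; rewrite hc gc eqxx orbT.
    by exists (g', i); rewrite /lexprod /= egg'.
  split; last first.
    move=> f [_ fanti].
    have := fanti (c, i0) (g1, i0) ltac:(by rewrite /lexprod /= hc eq_sym g1c eqxx).
    exact: nw_ge2.
  have h0 : 0 < #|T| by apply: leq_trans h3.
  pose c0 := enum_val (Ordinal h0 : 'I_#|T|).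
  pose r g := nat_of_ord (enum_rank (tperm c c0 g)).
  have rc : r c = 0 by rewrite /r tpermL enum_valK.
  have rinj : injective r by move=> g g' /val_inj/enum_rank_inj/perm_inj.
  have rlt : forall g, r g < #|T| by move=> g; exact: ltn_ord.
  pose f (p : T * 'I_n) := (r p.1 * n + p.2).+1.
  pose S g := \sum_(j < n) f (g, j).
  pose C := \sum_(j < n) (nat_of_ord j).+1.
  have SE : forall g, S g = n * (r g * n) + C.
    move=> g; rewrite /S /f /=.
    under eq_bigr do rewrite -addnS.
    by rewrite big_split /= sum_nat_const card_ord.
  have wst : forall p, weight (lexprod e (@edgeless 'I_n)) f p =
      if p.1 == c then \sum_(g' | g' != c) S g' else S c.
    move=> [g i]; rewrite wE /=; case: (eqVneq g c) => [->|gc].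
      apply: eq_bigl => g'; rewrite hc eqxx orTb andbT eq_sym //.
    rewrite (eq_bigl (fun g' => g' == c)) ?big_pred1_eq //.
    move=> g'; rewrite hc (negbTE gc) /=.
    by case: (eqVneq g' c) => [->|_]; rewrite ?andbT ?andbF ?gc.
  have AB : S c < \sum_(g' | g' != c) S g'.
    rewrite (bigD1 g1) //=; apply: leq_trans (leq_addr _ _).
    rewrite !SE rc muln0 add0n -{1}[C]add0n ltn_add2r.
    have : r g1 != 0 by rewrite -rc (inj_eq rinj).
    rewrite -lt0n => H; rewrite muln_gt0 n0 muln_gt0 H n0 //.
  exists f; split; last first.
    apply/eqP; rewrite eqn_leq; apply/andP; split.
      apply: (@nw_le2 _ _ (\sum_(g' | g' != c) S g') (S c)) => p.
      by rewrite wst; case: ifP; rewrite eqxx ?orbT.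
    apply: (@nw_ge2 _ _ (c, i0) (g1, i0)).
    by rewrite !wst /= eqxx (negbTE g1c) eq_sym neq_ltn AB.
  split.
    split.
      move=> [g i] [g' i'] /= [] E.
      have ii : i = i' :> nat.
        by have := congr1 (modn^~ n) E; rewrite !modnMDl !modn_small.
      move: E; rewrite ii => /addIn/eqP; rewrite eqn_pmul2r // => /eqP/rinj ->.
      by congr pair; apply: val_inj.
    move=> [g i]; rewrite /f /= card_prod card_ord.
    have := rlt g; have := ltn_ord i; nia.
  move=> [g i] [g' i'] /=; rewrite /lexprod /edgeless /= andbF orbF hc.
  case/andP=> gg' /orP[/eqP E|/eqP E]; rewrite E in gg'; rewrite !wst /= E eqxx.
    by rewrite eq_sym in gg'; rewrite (negbTE gg') neq_ltn AB orbT.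
  by rewrite (negbTE gg') neq_ltn AB.
Qed.
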